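(* Let $N$ be a tree rooted at $g$ with positive edge capacities and leaf set $L$, and let $G_R$ be a request graph on $V\cup\{g\}$, $|V|=k$, with bandwidths $f_e\ge0$. Let $T$ be the binary tree obtained from $N$ by Create-Binary-Tree, and run the dynamic program described in the context (Algorithm 2) on $T$ and $G_R$. Then the value $\mathrm{cong}[g,V]$ it returns equals the minimum, over all embeddings $\pi:V\to L$, of the congestion of $\pi$ in $N$.
   Context: Embedding problem: an embedding is an injective map $\pi:V\to L$ with $\pi(g)=g$; request edges are $(v_i,g)$ (type I, set $R^{I}$) or $(v_i,v_j)$ (type II, set $R^{II}$); the congestion of an edge $e$ of the host tree is $\frac1{c_e}\sum f_{(u,v)}$ over request edges $(u,v)$ whose host path between $\pi(u)$ and $\pi(v)$ contains $e$, and the congestion of $\pi$ is the maximum over host edges. Create-Binary-Tree$(N,g)$: for every node $v$ of $N$ of degree $>3$ with children $u_1,\dots,u_d$ via edges $e_1,\dots,e_d$, replace these edges by a binary tree rooted at $v$ with leaves $u_1,\dots,u_d$; the edge into $u_i$ gets capacity $c_{e_i}$, all other new edges capacity $\infty$. Algorithm 2: for a node $u$ of $T$ let $e_u$ be the edge from its parent to $u$, $u_l,u_r$ its left and right children, and $e_l,e_r$ the edges to them; $L^j$ is the set of nodes at distance $j$ from $g$ and $H$ the height of $T$. For each $S\subseteq V$ set $\mathrm{Flow}[S]=\sum_{(v,g)\in R^{I},v\in S}f_{(v,g)}+\sum_{(u,v)\in R^{II},u\in S,v\notin S}f_{(u,v)}$. For each leaf $u$ and $S\subseteq V$ set $\mathrm{cong}[u,S]=0$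 if $|S|\le1$ and $\infty$ otherwise. For $j=H,H-1,\dots,0$ and each non-leaf $u\in L^j$ and each $S\subseteq V$, set $\mathrm{cong}[u,S]=\min_{S_l\subseteq S}\max\{\mathrm{cong}[u_l,S_l],\mathrm{cong}[u_r,S\setminus S_l],\mathrm{Flow}[S_l]/c_{e_l},\mathrm{Flow}[S\setminus S_l]/c_{e_r}\}$ (recording a minimizing partition). Return $\mathrm{cong}[g,V]$. *)

(* Defs.v *)
From HB Require Import structures.
From mathcomp Require Import all_boot all_order all_algebra.
From mathcomp Require Import constructive_ereal.
Set Implicit Arguments. Unset Strict Implicit. Unset Printing Implicit Defensive.
Import Order.TTheory GRing.Theory Num.Theory.
Local Open Scope ring_scope.

Section Trees.
Variable T : finType.
Variable par : T -> T.
Variable r : T.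

Definition is_rooted_tree : Prop :=
  par r = r /\ forall x, exists n, iter n par x = r.

Definition anc (x w : T) : bool := [exists n : 'I_#|T|.+1, iter n par x == w].

Definition children (v : T) : {set T} := [set u | (u != r) && (par u == v)].

Definition is_leaf (u : T) : bool := (u != r) && (children u == set0).

(* The edge e_w joins par w and w (w != r).  It lies on the (unique) tree path
   between a and b iff w is an ancestor-or-self of exactly one of a, b. *)
Definition on_path (a b w : T) : bool := (w != r) && (anc a w != anc b w).
End Trees.

Section Embedding.
Variable R : realFieldType.
Variables (Node : finType) (par : Node -> Node) (g : Node) (c : Node -> R).
Variables (V : finType) (fI : V -> R) (fII : V -> V -> R).
(* fI v  = bandwidth of the type-I request (v,g) (0 = no request);
   fII u v = bandwidth of the type-II request between u and v.  *)

(* embeddings pi : V -> L, injective (pi g = g is implicit: leaves are <> g) *)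
Definition is_embedding (pi : {ffun V -> Node}) : bool :=
  injectiveb pi && [forall v, is_leaf par g (pi v)].

Definition edge_congestion (pi : {ffun V -> Node}) (w : Node) : R :=
  (\sum_(v : V | on_path par g (pi v) g w) fI v
   + \sum_(u : V) \sum_(v : V | on_path par g (pi u) (pi v) w) fII u v) / c w.

Definition congestion (pi : {ffun V -> Node}) : R :=
  \big[Num.max/0]_(w : Node | w != g) edge_congestion pi w.

Definition opt_congestion : \bar R :=
  \big[mine/+oo%E]_(pi : {ffun V -> Node} | is_embedding pi) (congestion pi)%:E.

Definition Flow (S : {set V}) : R :=
  \sum_(v in S) fI v + \sum_(u in S) \sum_(v in ~: S) (fII u v + fII v u).
End Embedding.

(* Create-Binary-Tree(N,g): (TN, parT, rT, cT) is a tree obtained from the tree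
   (Node, par, g, c) by the construction; emb identifies the original nodes
   inside TN; cT w = None encodes capacity infinity. *)
Definition create_binary_tree (R : realFieldType)
  (Node : finType) (par : Node -> Node) (g : Node) (c : Node -> R)
  (TN : finType) (parT : TN -> TN) (rT : TN) (cT : TN -> option R)
  (emb : Node -> TN) : Prop :=
  [/\ is_rooted_tree parT rT, injective emb & emb g = rT] /\
  [/\ (forall u, u != g -> cT (emb u) = Some (c u)),
      (forall w, (forall u, emb u != w) ->
          cT w = None /\ #|children parT rT w| = 2),
      (forall u, u != g -> exists2 n, (0 < n)%N &
          iter n parT (emb u) = emb (par u) /\
          forall m, (0 < m < n)%N -> forall u', iter m parT (emb u) != emb u')
      & (forall v, if (#|children par g v| <= 2)%N
                 then children parT rT (emb v) = emb @: children par g v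
                 else #|children parT rT (emb v)| = 2)].

Section DP.
Variable R : realFieldType.
Variables (V : finType) (TN : finType) (parT : TN -> TN) (rT : TN).
Variable cT : TN -> option R.
Variable Flow : {set V} -> R.

Definition load (w : TN) (x : R) : \bar R :=
  if cT w is Some cw then (x / cw)%:E else 0%E.

(* One round of the recurrence of Algorithm 2, applied at every node.  A node with a single child a is treated as if its other
   child carried nothing. *)
Definition dp_step (tab : TN -> {set V} -> \bar R) (u : TN) (S : {set V})
  : \bar R :=
  let Ch := children parT rT u in
  match [pick a in Ch] with
  | None => if (#|S| <= 1)%N then 0%E else +oo%E
  | Some a =>
    match [pick b in Ch :\ a] with
    | None => maxe (tab a S) (load a (Flow S))
    | Some b =>
      \big[mine/+oo%E]_(Sl : {set V} | Sl \subset S)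
        maxe (maxe (tab a Sl) (tab b (S :\: Sl)))
             (maxe (load a (Flow Sl)) (load b (Flow (S :\: Sl))))
    end
  end.

(* Iterating #|TN| (> height of the tree) rounds computes the table
   bottom-up, exactly as the level-by-level loop j = H, ..., 0. *)
Definition dp_table : TN -> {set V} -> \bar R :=
  iter #|TN| dp_step (fun _ _ => +oo%E).

Definition dp_result : \bar R := dp_table rT [set: V].
End DP.

(* Main.v *)
Require Import Defs.
From HB Require Import structures.
From mathcomp Require Import all_boot all_order all_algebra.
From mathcomp Require Import constructive_ereal.
Set Implicit Arguments. Unset Strict Implicit. Unset Printing Implicit Defensive.
Import Order.TTheory GRing.Theory Num.Theory.
Section TreeFacts.
Variables (T : finType) (par : T -> T) (r : T).
Hypothesis Ht : is_rooted_tree par r.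

Lemma ancP x w : reflect (exists n, iter n par x = w) (anc par x w).
Proof.
apply: (iffP existsP) => [[n /eqP <-]|[n Hn]]; first by exists n.
have Hc : fconnect par x w by rewrite -Hn fconnect_iter.
have Hlt := findex_max Hc.
have Ho : (order par x <= #|T|)%N by rewrite /order max_card.
have Hk : (findex par x w < #|T|.+1)%N by apply: leq_trans Hlt _; apply: leq_trans Ho _.
by exists (Ordinal Hk); rewrite /= iter_findex.
Qed.

Lemma anc_iter x n : anc par x (iter n par x).
Proof. by apply/ancP; exists n. Qed.

Lemma anc_refl x : anc par x x.
Proof. exact: (anc_iter x 0). Qed.

Lemma anc_par x : anc par x (par x).
Proof. exact: (anc_iter x 1). Qed.

Lemma anc_trans x y z : anc par x y -> anc par y z -> anc par x z.
Proof.
move=> /ancP[n <-] /ancP[m <-]; apply/ancP; exists (m + n)%N.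
by rewrite iterD.
Qed.

Lemma iter_r n : iter n par r = r.
Proof. by case: Ht => Hr _; elim: n => //= n ->. Qed.

Lemma anc_r x : anc par x r.
Proof. by case: Ht => _ /(_ x) [n Hn]; apply/ancP; exists n. Qed.

Lemma iter_mul x p k : iter p par x = x -> iter (k * p) par x = x.
Proof.
move=> Hp; elim: k => [|k IH] //=; by rewrite mulSn iterD IH Hp.
Qed.

Lemma anc_anti x y : anc par x y -> anc par y x -> x = y.
Proof.
move=> /ancP[n Hn] /ancP[m Hm].
have Hx : iter (m + n) par x = x by rewrite iterD Hn Hm.
case: (posnP (m + n)) => Hmn.
  by move/eqP: Hmn; rewrite addn_eq0 => /andP[/eqP Hm0 /eqP Hn0]; rewrite -Hn Hn0.
case: Ht => _ /(_ x) [N HN].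
have HxN := iter_mul N Hx.
have Hle : (N <= N * (m + n))%N by rewrite leq_pmulr.
have : iter (N * (m + n)) par x = r.
  by rewrite -(subnK Hle) iterD HN iter_r.
by rewrite HxN => Hxr; rewrite -Hn Hxr iter_r.
Qed.

Lemma par_neq x : x != r -> par x != x.
Proof.
move=> Hx; apply/eqP => Hp; case: Ht => _ /(_ x) [N HN].
have : iter N par x = x by elim: N {HN} => //= N ->.
by rewrite HN => Hr; move: Hx; rewrite Hr eqxx.
Qed.

Lemma anc_total x a b : anc par x a -> anc par x b -> anc par a b || anc par b a.
Proof.
move=> /ancP[n <-] /ancP[m <-]; case: (leqP n m) => H.
  by apply/orP; left; apply/ancP; exists (m - n)%N; rewrite -iterD subnK.
by apply/orP; right; apply/ancP; exists (n - m)%N; rewrite -iterD subnK // ltnW.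
Qed.

Lemma anc_step y w : anc par y w -> y != w -> anc par (par y) w.
Proof.
move=> /ancP[[|n] Hn] Hyw; first by move: Hyw; rewrite -Hn eqxx.
by apply/ancP; exists n; rewrite -iterSr.
Qed.

Lemma child_of x y : anc par y x -> y != x ->
  exists2 z, z \in children par r x & anc par y z.
Proof.
move=> Hyx Hne.
have Hex : exists n, iter n par y == x by case/ancP: Hyx => n Hn; exists n; apply/eqP.
case: (ex_minnP Hex) => m /eqP Hm Hmin.
case: m Hm Hmin => [|m] Hm Hmin; first by move: Hne; rewrite -Hm eqxx.
exists (iter m par y); last exact: anc_iter.
rewrite inE -iterS Hm eqxx andbT; apply/eqP => Hr.
have : iter m par y == x by rewrite Hr -Hm iterS Hr; case: Ht => -> _.
by move/Hmin; rewrite ltnn.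
Qed.

Lemma child_inv x a : a \in children par r x -> par a = x /\ a != r.
Proof. by rewrite inE => /andP[-> /eqP]. Qed.

Lemma child_anc x a : a \in children par r x -> anc par a x.
Proof. by move/child_inv => [<- _]; exact: anc_par. Qed.

Lemma child_not_anc x a : a \in children par r x -> ~~ anc par x a.
Proof.
move=> Ha; apply/negP => Hxa.
have := anc_anti (child_anc Ha) Hxa; case/child_inv: Ha => Hp Hr Hax.
by move: (par_neq Hr); rewrite Hp Hax eqxx.
Qed.

Lemma below_child x a y : a \in children par r x -> anc par y a ->
  anc par y x && (y != x).
Proof.
move=> Ha Hya; rewrite (anc_trans Hya (child_anc Ha)) /=.
by apply/eqP => Hyx; move: (child_not_anc Ha); rewrite -Hyx Hya.
Qed.

Lemma children_disj x a b y : a \in children par r x -> b \in children par r x ->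
  anc par y a -> anc par y b -> a = b.
Proof.
move=> Ha Hb Hya Hyb.
have key : forall a b, a \in children par r x -> b \in children par r x ->
    anc par a b -> a = b.
  move=> a' b' Ha' Hb' Hab; apply/eqP/negPn/negP => Hne.
  have H1 := anc_step Hab Hne; case/child_inv: Ha' => Hp _; rewrite Hp in H1.
  by move: (child_not_anc Hb'); rewrite H1.
case/orP: (anc_total Hya Hyb) => H; first exact: key.
by apply/esym; apply: key.
Qed.

Lemma leaf_below x y : children par r x = set0 -> anc par y x -> y = x.
Proof.
move=> Hc Hyx; apply/eqP/negPn/negP => Hne.
by case: (child_of Hyx Hne) => z; rewrite Hc inE.
Qed.

Lemma sub_child_lt x a : a \in children par r x ->
  (#|[set y | anc par y a]| < #|[set y | anc par y x]|)%N.
Proof.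
move=> Ha; apply: proper_card; apply/properP; split.
  by apply/subsetP => y; rewrite !inE => Hy; case/andP: (below_child Ha Hy).
by exists x; rewrite !inE ?anc_refl // (negbTE (child_not_anc Ha)).
Qed.

End TreeFacts.

Local Open Scope ring_scope.

Lemma bigmin_maxr (R : realFieldType) (I : finType) (P : pred I) (F : I -> \bar R) K :
  \big[mine/+oo%E]_(i | P i) maxe (F i) K = maxe (\big[mine/+oo%E]_(i | P i) F i) K.
Proof.
apply/esym; apply: (big_morph (fun t => maxe t K)).
  by move=> a b; rewrite max_minl.
by rewrite max_l // leey.
Qed.

Section DPC.
Variable R : realFieldType.
Variables (V : finType) (TN : finType) (parT : TN -> TN) (rT : TN).
Variable cT : TN -> option R.
Variable Flow : {set V} -> R.
Hypothesis Ht : is_rooted_tree parT rT.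
Hypothesis Hch2 : forall x, (#|children parT rT x| <= 2)%N.

Local Notation anc := (anc parT).
Local Notation ch := (children parT rT).
Local Notation leaf := (is_leaf parT rT).
Local Notation load := (load cT).

Definition good x (S : {set V}) (f : {ffun V -> TN}) : bool :=
  [forall v in S, anc (f v) x && leaf (f v)] &&
  [forall u in S, forall v in S, (f u == f v) ==> (u == v)].

Definition Fw S (f : {ffun V -> TN}) w : \bar R :=
  load w (Flow (S :&: [set v | anc (f v) w])).

Definition cost x S f : \bar R :=
  \big[maxe/0%E]_(w | (w != x) && anc w x) Fw S f w.

Definition best x S : \bar R := \big[mine/+oo%E]_(f | good x S f) cost x S f.

Lemma goodP x (S : {set V}) (f : {ffun V -> TN}) : reflect
  ((forall v, v \in S -> anc (f v) x /\ leaf (f v)) /\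
   (forall u v, u \in S -> v \in S -> f u = f v -> u = v)) (good x S f).
Proof.
apply: (iffP andP) => [[/forall_inP H1 H2]|[H1 H2]]; split.
- by move=> v /H1 /andP.
- move=> u v Hu Hv Huv; move/forall_inP: H2 => /(_ u Hu) /forall_inP /(_ v Hv).
  by rewrite Huv eqxx => /eqP.
- by apply/forall_inP => v /H1 [-> ->].
- apply/forall_inP => u Hu; apply/forall_inP => v Hv; apply/implyP => /eqP.
  by move/(H2 u v Hu Hv) ->.
Qed.

Lemma cost_ge0 x (S : {set V}) f : (0 <= cost x S f)%E.
Proof. exact: bigmax_ge_id. Qed.

Lemma leaf_not_parent y x a : leaf y -> a \in ch x -> y != x.
Proof.
move=> /andP[_ /eqP Hy] Ha; apply/eqP => Hyx; by move: Ha; rewrite -Hyx Hy inE.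
Qed.

Lemma cost_child x a (S : {set V}) f : a \in ch x ->
  \big[maxe/0%E]_(w | ((w != x) && anc w x) && anc w a) Fw S f w =
  maxe (Fw S f a) (cost a (S :&: [set v | anc (f v) a]) f).
Proof.
move=> Ha.
rewrite (eq_bigl (fun w => anc w a)); last first.
  move=> w; case Hwa: (anc w a); last by rewrite andbF.
  by rewrite andbT andbC; case/andP: (below_child Ht Ha Hwa) => -> ->.
rewrite (bigmaxID _ (fun w => w == a)).
rewrite (eq_bigl (mem [set a])); last first.
  by move=> w; rewrite !inE andbC; case: eqP => [->|]; rewrite ?anc_refl.
rewrite bigmax_set1 -maxA; congr maxe.
rewrite max_r; last exact: bigmax_ge_id.
rewrite /cost; apply: eq_big => [w|w]; first by rewrite andbC.
move=> /andP[Hwa _]; rewrite /Fw; congr (load _ (Flow _)).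
apply/setP => v; rewrite !inE; case Hv: (anc (f v) w); rewrite ?andbF //.
by rewrite ?andbT (anc_trans Hv Hwa) andbT.
Qed.

Lemma costE_one x a (S : {set V}) (f : {ffun V -> TN}) : (forall c, (c \in ch x) = (c == a)) ->
  (forall v, v \in S -> anc (f v) x /\ leaf (f v)) ->
  cost x S f = maxe (cost a S f) (load a (Flow S)).
Proof.
move=> Hc Hf.
have Ha : a \in ch x by rewrite Hc.
have HS : S :&: [set v | anc (f v) a] = S.
  apply/setP => v; rewrite !inE; case Hv: (v \in S) => //=.
  case: (Hf v Hv) => H1 H2.
  case: (child_of Ht H1 (leaf_not_parent H2 Ha)) => z; rewrite Hc => /eqP -> //.
rewrite {1}/cost (bigmaxID _ (fun w => anc w a)) cost_child // HS.
rewrite [X in maxe (maxe _ _) X]big_pred0; last first.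
  move=> w; apply/negbTE; apply/negP => /andP[/andP[Hwx Hwx'] Hna].
  case: (child_of Ht Hwx' Hwx) => z; rewrite Hc => /eqP ->.
  by rewrite (negbTE Hna).
rewrite max_l; last by rewrite le_max cost_ge0 orbT.
by rewrite maxC /Fw HS.
Qed.

Lemma costE_two x a b (S : {set V}) (f : {ffun V -> TN}) : a != b ->
  (forall c, (c \in ch x) = (c == a) || (c == b)) ->
  (forall v, v \in S -> anc (f v) x /\ leaf (f v)) ->
  let Sl := S :&: [set v | anc (f v) a] in
  cost x S f = maxe (maxe (cost a Sl f) (cost b (S :\: Sl) f))
                    (maxe (load a (Flow Sl)) (load b (Flow (S :\: Sl)))).
Proof.
move=> Hab Hc Hf Sl.
have Ha : a \in ch x by rewrite Hc eqxx.
have Hb : b \in ch x by rewrite Hc eqxx orbT.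
have HS : S :&: [set v | anc (f v) b] = S :\: Sl.
  apply/setP => v; rewrite !inE; case Hv: (v \in S); rewrite ?andbF //=.
  case: (Hf v Hv) => H1 H2.
  case: (child_of Ht H1 (leaf_not_parent H2 Ha)) => z; rewrite Hc.
  case/orP => /eqP -> Hz.
    rewrite Hz /=; apply/negbTE/negP => Hb'.
    by move: Hab; rewrite (children_disj Ht Ha Hb Hz Hb') eqxx.
  rewrite Hz andbT; apply/esym/negP => Ha'.
  by move: Hab; rewrite (children_disj Ht Ha Hb Ha' Hz) eqxx.
rewrite {1}/cost (bigmaxID _ (fun w => anc w a)) cost_child //.
rewrite (eq_bigl (fun w => ((w != x) && anc w x) && anc w b)); last first.
  move=> w; case Hwb: (anc w b); rewrite ?andbT ?andbF.
    case/andP: (below_child Ht Hb Hwb) => -> ->; rewrite /=.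
    apply/negP => Hwa; move: Hab; by rewrite (children_disj Ht Ha Hb Hwa Hwb) eqxx.
  apply/negbTE/negP => /andP[/andP[Hwx Hwx'] Hna].
  case: (child_of Ht Hwx' Hwx) => z; rewrite Hc; case/orP => /eqP -> Hz.
    by rewrite Hz in Hna.
  by rewrite Hz in Hwb.
rewrite cost_child // HS /Fw HS.
by rewrite -/Sl maxACA maxC.
Qed.

Lemma cost_eqf x (S : {set V}) (f f' : {ffun V -> TN}) :
  {in S, f =1 f'} -> cost x S f = cost x S f'.
Proof.
move=> H; apply: eq_bigr => w _; rewrite /Fw; congr (load _ (Flow _)).
by apply/setP => v; rewrite !inE; case Hv: (v \in S) => //=; rewrite H.
Qed.

Lemma best_leaf x (S : {set V}) : x != rT -> ch x = set0 ->
  best x S = if (#|S| <= 1)%N then 0%E else +oo%E.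
Proof.
move=> Hx Hc.
have Hg : forall f, good x S f -> forall v, v \in S -> f v = x.
  move=> f /goodP[H1 _] v /H1 [H _]. exact (leaf_below Ht Hc H).
case: ifP => Hs.
  apply/le_anti/andP; split; last first.
    by apply: le_bigmin => [|f _]; [exact: leey | exact: cost_ge0].
  have Hgd : good x S [ffun=> x].
    apply/goodP; split.
      by move=> v _; rewrite ffunE anc_refl; split => //; rewrite /is_leaf Hx Hc eqxx.
    by move=> u v Hu Hv _; rewrite ((card_le1_eqP Hs) u v Hu Hv).
  apply: le_trans (bigmin_le_cond _ _ Hgd) _.
  rewrite /cost big_pred0 // => w; apply/negbTE/negP => /andP[Hw Hw'].
  by move: Hw; rewrite (leaf_below Ht Hc Hw') eqxx.
rewrite /best big_pred0 // => f; apply/negbTE/negP => Hf.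
have Hs2 : (1 < #|S|)%N by rewrite ltnNge Hs.
case/card_gt1P: Hs2 => [u [v [Hu Hv Huv]]].
case/goodP: (Hf) => _ /(_ u v Hu Hv).
rewrite (Hg f Hf u Hu) (Hg f Hf v Hv) => /(_ erefl) Heq.
by move: Huv; rewrite Heq eqxx.
Qed.

Lemma best_one x a (S : {set V}) : (forall c, (c \in ch x) = (c == a)) ->
  best x S = maxe (best a S) (load a (Flow S)).
Proof.
move=> Hc; have Ha : a \in ch x by rewrite Hc.
have Hgood : forall f, good x S f = good a S f.
  move=> f; apply/goodP/goodP => -[H1 H2]; split => // v /H1 [Hv Hl]; split => //.
    case: (child_of Ht Hv (leaf_not_parent Hl Ha)) => z; rewrite Hc => /eqP -> //.
  exact: anc_trans Hv (child_anc Ha).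
rewrite /best -bigmin_maxr; apply: eq_big => [f|f Hf]; first exact: Hgood.
by apply: costE_one => //; case/goodP: Hf.
Qed.

Lemma best_two x a b (S : {set V}) : a != b ->
  (forall c, (c \in ch x) = (c == a) || (c == b)) ->
  best x S = \big[mine/+oo%E]_(Sl : {set V} | Sl \subset S)
      maxe (maxe (best a Sl) (best b (S :\: Sl)))
           (maxe (load a (Flow Sl)) (load b (Flow (S :\: Sl)))).
Proof.
move=> Hab Hc.
have Ha : a \in ch x by rewrite Hc eqxx.
have Hb : b \in ch x by rewrite Hc eqxx orbT.
have Hdisj : forall y, anc y a -> anc y b -> False.
  by move=> y Hya Hyb; move: Hab; rewrite (children_disj Ht Ha Hb Hya Hyb) eqxx.
apply/le_anti/andP; split.
  apply: le_bigmin => [|Sl HSl]; first exact: leey.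
  case: (pickP (good a Sl)) => [fa0 Hfa0|Hna]; last first.
    rewrite {2}/best big_pred0 // maxye maxye; exact: leey.
  case: (pickP (good b (S :\: Sl))) => [fb0 Hfb0|Hnb]; last first.
    rewrite {3}/best big_pred0 // maxey maxye; exact: leey.
  case: (eq_bigmin _ _ (cost a Sl) Hfa0 (fun i _ => leey (cost a Sl i))) => fa.
  rewrite unfold_in => Hfa Ea.
  case: (eq_bigmin _ _ (cost b (S :\: Sl)) Hfb0
     (fun i _ => leey (cost b (S :\: Sl) i))) => fb.
  rewrite unfold_in => Hfb Eb.
  rewrite /best Ea Eb -/(best x S).
  set f := [ffun v => if v \in Sl then fa v else fb v].
  case/goodP: Hfa => Hfa1 Hfa2; case/goodP: Hfb => Hfb1 Hfb2.
  have Hf1 : forall v, v \in S -> anc (f v) x /\ leaf (f v).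
    move=> v Hv; rewrite ffunE; case: ifP => Hvl.
      by case: (Hfa1 v Hvl) => H1 H2; split => //; exact: anc_trans H1 (child_anc Ha).
    have Hv' : v \in S :\: Sl by rewrite inE Hvl Hv.
    by case: (Hfb1 v Hv') => H1 H2; split => //; exact: anc_trans H1 (child_anc Hb).
  have Hgd : good x S f.
    apply/goodP; split => // u v Hu Hv; rewrite !ffunE.
    case: ifP => Hul; case: ifP => Hvl.
    - exact: Hfa2.
    - move=> E; have Hv' : v \in S :\: Sl by rewrite inE Hvl Hv.
      case: (Hfa1 u Hul) => H1 _; case: (Hfb1 v Hv') => H2 _.
      by case: (Hdisj (fb v)) => //; rewrite -E.
    - move=> E; have Hu' : u \in S :\: Sl by rewrite inE Hul Hu.
      case: (Hfa1 v Hvl) => H1 _; case: (Hfb1 u Hu') => H2 _.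
      by case: (Hdisj (fa v)) => //; rewrite -E.
    - by apply: Hfb2; rewrite inE ?Hul ?Hvl.
  apply: le_trans (bigmin_le_cond _ _ Hgd) _.
  have HSl' : S :&: [set v | anc (f v) a] = Sl.
    apply/setP => v; rewrite !inE ffunE; case: ifP => Hvl.
      by rewrite (subsetP HSl _ Hvl); case: (Hfa1 v Hvl).
    rewrite andbC; case Hv: (v \in S); rewrite ?andbF //= andbT.
    have Hv' : v \in S :\: Sl by rewrite inE Hvl Hv.
    case: (Hfb1 v Hv') => H1 _; apply/negbTE/negP => H2; exact: Hdisj H2 H1.
  rewrite (costE_two Hab Hc Hf1) /= HSl'.
  rewrite (@cost_eqf a Sl f fa); last by move=> v Hv; rewrite ffunE Hv.
  rewrite (@cost_eqf b (S :\: Sl) f fb) //.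
  by move=> v; rewrite inE => /andP[Hv _]; rewrite ffunE (negbTE Hv).
apply: le_bigmin => [|f Hf]; first exact: leey.
case/goodP: (Hf) => Hf1 Hf2.
rewrite (costE_two Hab Hc Hf1) /=.
set Sl := S :&: _.
apply: bigmin_inf (subsetIl S _) _.
apply: le_max2; last exact: lexx.
apply: le_max2; apply: bigmin_le_cond; apply/goodP; split.
- move=> v; rewrite !inE => /andP[Hv Ha']; split => //; by case: (Hf1 v Hv).
- by move=> u v; rewrite inE => /andP[Hu _]; rewrite inE => /andP[Hv _]; apply: Hf2.
- move=> v; rewrite !inE negb_and => /andP[Hnv Hv]; case: (Hf1 v Hv) => H1 H2.
  split => //; rewrite Hv /= in Hnv.
  case: (child_of Ht H1 (leaf_not_parent H2 Ha)) => z; rewrite Hc.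
  by case/orP => /eqP -> // Hz; rewrite Hz in Hnv.
- move=> u v; rewrite !inE => /andP[_ Hu] /andP[_ Hv]; exact: Hf2.
Qed.

Lemma dp_correct n x S : (#|[set y | anc y x]| <= n)%N ->
  (x != rT) || (ch x != set0) ->
  iter n (dp_step parT rT cT Flow) (fun _ _ => +oo%E) x S = best x S.
Proof.
elim: n x S => [|n IH] x S Hn Hx.
  have Hin : x \in [set y | anc y x] by rewrite inE anc_refl.
  by move: Hn; rewrite leqn0 cards_eq0 => /eqP E; rewrite E inE in Hin.
have IHc : forall a, a \in ch x -> forall S,
    iter n (dp_step parT rT cT Flow) (fun _ _ => +oo%E) a S = best a S.
  move=> a Ha S'; apply: IH.
    by rewrite -ltnS; apply: leq_trans (sub_child_lt Ht Ha) Hn.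
  by case/child_inv: Ha => _ ->.
rewrite iterS /dp_step /=.
case: pickP => [a Ha|Hnone]; last first.
  have Hc : ch x = set0.
    by apply/setP => c; rewrite in_set0; exact: Hnone c.
  rewrite Hc eqxx orbF in Hx.
  by rewrite best_leaf.
case: pickP => [b Hb|Hnb].
  move: Hb; rewrite in_setD1 => /andP[Hba Hb].
  have Hab : a != b by rewrite eq_sym.
  have Hc : forall c, (c \in ch x) = (c == a) || (c == b).
    move=> c; apply/idP/idP; last by case/orP => /eqP ->.
    move=> Hcx; apply/negPn/negP; rewrite negb_or => /andP[Hca Hcb].
    have Hsub : c |: [set a; b] \subset ch x.
      apply/subsetP => y Hy.
      have : [|| y == c, y == a | y == b] by move: Hy; rewrite !inE.
      by case/or3P => /eqP ->.
    have := subset_leq_card Hsub; rewrite cardsU1 cards2 !inE.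
    rewrite negb_or Hab Hca Hcb.
    by move=> H; move: (leq_trans H (Hch2 x)).
  rewrite (best_two S Hab Hc); apply: eq_bigr => Sl _.
  by rewrite !IHc.
have Hc : forall c, (c \in ch x) = (c == a).
  move=> c; apply/idP/idP; last by move/eqP ->.
  move=> Hcx; apply/negPn/negP => Hca.
  by move: (Hnb c); rewrite /= in_setD1 Hca Hcx.
by rewrite (best_one S Hc) IHc // Hc.
Qed.
End DPC.

Lemma edge_flow (R : realFieldType) (Node : finType) (par : Node -> Node) (g : Node)
  (c : Node -> R) (V : finType) (fI : V -> R) (fII : V -> V -> R)
  (pi : {ffun V -> Node}) (u : Node) :
  is_rooted_tree par g -> u != g ->
  edge_congestion par g c fI fII pi u =
  Flow fI fII [set v | anc par (pi v) u] / c u.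
Proof.
move=> Ht Hu; rewrite /edge_congestion; congr (_ / _).
set S := [set v | anc par (pi v) u].
have Hg : anc par g u = false.
  apply/negbTE/negP => /ancP[n]; rewrite (iter_r Ht) => E.
  by move: Hu; rewrite E eqxx.
have Hon : forall a b, on_path par g a b u = (anc par a u != anc par b u).
  by move=> a b; rewrite /on_path Hu.
rewrite /Flow; congr (_ + _).
  by apply: eq_bigl => v; rewrite Hon Hg inE; case: anc.
under [in RHS]eq_bigr do rewrite big_split.
rewrite big_split /= [X in _ = _ + X]exchange_big /=.
rewrite (bigID (mem S)) /=; congr (_ + _).
  apply: eq_bigr => x Hx; apply: eq_bigl => v.
  by rewrite Hon !inE; move: Hx; rewrite inE => ->; case: anc.
apply: eq_big => [x|x Hx]; first by rewrite in_setC.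
apply: eq_bigl => v.
by rewrite Hon !inE; move: Hx; rewrite inE => /negbTE ->; case: anc.
Qed.

Section Emb.
Variable R : realFieldType.
Variables (Node : finType) (par : Node -> Node) (g : Node) (c : Node -> R).
Variables (TN : finType) (parT : TN -> TN) (rT : TN) (cT : TN -> option R)
  (emb : Node -> TN).
Hypothesis Hrt : is_rooted_tree par g.
Hypothesis Hcbt : create_binary_tree par g c parT rT cT emb.

Lemma HtT : is_rooted_tree parT rT. Proof. by case: Hcbt => [[]]. Qed.
Lemma Hinj : injective emb. Proof. by case: Hcbt => [[]]. Qed.
Lemma Hemb : emb g = rT. Proof. by case: Hcbt => [[]]. Qed.
Lemma H1 u : u != g -> cT (emb u) = Some (c u). Proof. by case: Hcbt => _ [H _ _ _]; exact: H. Qed.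
Lemma H2 w : (forall u, emb u != w) ->
  cT w = None /\ #|children parT rT w| = 2. Proof. by case: Hcbt => _ [_ H _ _]; exact: H. Qed.
Lemma H3 u : u != g -> exists2 n, (0 < n)%N &
  iter n parT (emb u) = emb (par u) /\
  forall m, (0 < m < n)%N -> forall u', iter m parT (emb u) != emb u'.
Proof. by case: Hcbt => _ [_ _ H _]; exact: H. Qed.
Lemma H4 v : if (#|children par g v| <= 2)%N
             then children parT rT (emb v) = emb @: children par g v
             else #|children parT rT (emb v)| = 2.
Proof. by case: Hcbt => _ [_ _ _ H]; exact: H. Qed.

Lemma in_img w : [exists u, emb u == w] = false -> forall u, emb u != w.
Proof. by move=> Hn u; apply/negP => E; move/negbT/existsP: Hn; apply; exists u. Qed.

Lemma Hch2 w : (#|children parT rT w| <= 2)%N.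
Proof.
case Hw: [exists u, emb u == w]; last by case: (H2 (in_img Hw)) => _ ->.
case/existsP: Hw => u /eqP <-; have := H4 u; case: ifP => Hle; last by move=> ->.
by move=> ->; apply: leq_trans (leq_imset_card _ _) Hle.
Qed.

Lemma leaf_emb u : is_leaf parT rT (emb u) = is_leaf par g u.
Proof.
rewrite /is_leaf.
have -> : (emb u != rT) = (u != g) by rewrite -Hemb (inj_eq Hinj).
congr andb.
have := H4 u; case: ifP => Hle; first by move=> ->; rewrite imset_eq0.
move=> Hc2; apply/idP/idP => /eqP E.
  by rewrite E cards0 in Hc2.
by rewrite E cards0 in Hle.
Qed.

Lemma leaf_img w : is_leaf parT rT w -> exists u, w = emb u.
Proof.
case Hw: [exists u, emb u == w].
  by case/existsP: Hw => u /eqP <- _; exists u.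
case: (H2 (in_img Hw)) => _ Hc2 /andP[_ /eqP E].
by rewrite E cards0 in Hc2.
Qed.

Lemma anc_emb x u : anc parT (emb x) (emb u) = anc par x u.
Proof.
apply/idP/idP.
  case/ancP => m; elim/ltn_ind: m x => m IH x Hm.
  case: (eqVneq x g) => [Hxg|Hxg].
    move: Hm; rewrite Hxg Hemb (iter_r HtT) -Hemb => /Hinj <-.
    exact: anc_refl.
  case: (H3 Hxg) => n Hn [Hit Hnot].
  case: (posnP m) => Hm0.
    by move: Hm; rewrite Hm0 /= => /Hinj ->; exact: anc_refl.
  case: (ltnP m n) => Hmn.
    by move: (Hnot m); rewrite Hm0 Hmn => /(_ isT u); rewrite Hm eqxx.
  apply: anc_trans (anc_par par x) _.
  apply: (IH (m - n)%N); first by rewrite ltn_subrL Hn Hm0.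
  by rewrite -Hit -iterD subnK.
case/ancP => k; elim: k x => [|k IH] x.
  by move=> /= ->; exact: anc_refl.
case: (eqVneq x g) => [Hxg|Hxg].
  rewrite iterSr Hxg; case: Hrt => -> _; rewrite -Hxg; exact: IH.
rewrite iterSr => /IH Hp.
case: (H3 Hxg) => n _ [Hit _].
by apply: anc_trans Hp; apply/ancP; exists n.
Qed.
End Emb.

Unset Implicit Arguments.

Theorem lemma3 (R : realFieldType)
  (Node : finType) (par : Node -> Node) (g : Node) (c : Node -> R)
  (V : finType) (fI : V -> R) (fII : V -> V -> R)
  (TN : finType) (parT : TN -> TN) (rT : TN) (cT : TN -> option R)
  (emb : Node -> TN) :
  is_rooted_tree par g ->
  (exists u, u != g) ->
  (forall u, u != g -> 0 < c u) ->
  (forall v, 0 <= fI v) ->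
  (forall u v, 0 <= fII u v) ->
  create_binary_tree par g c parT rT cT emb ->
  dp_result parT rT cT (Flow fI fII) = opt_congestion par g c fI fII.
Proof.
move=> Hrt [u0 Hu0] Hcpos HfI HfII Hcbt.
have HtT := HtT Hcbt.
have Hch2 := Hch2 Hcbt.
have Hemb := Hemb Hcbt.
have Hinj := Hinj Hcbt.
have Hroot : children parT rT rT != set0.
  case: (child_of Hrt (anc_r Hrt u0) Hu0) => z Hz _.
  have := H4 Hcbt g; rewrite Hemb; case: ifP => _.
    move=> ->; apply/set0Pn; exists (emb z); exact: imset_f.
  by move=> Hc2; apply/negP => /eqP E; rewrite E cards0 in Hc2.
rewrite /dp_result /dp_table (dp_correct _ _ HtT Hch2); first last.
- by rewrite Hroot orbT.
- exact: max_card.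
set FL := Flow fI fII.
have Hload : forall (pi : {ffun V -> Node}) u, u != g ->
    load cT (emb u) (FL (setT :&: [set v | anc parT (emb (pi v)) (emb u)])) =
    (edge_congestion par g c fI fII pi u)%:E.
  move=> pi u Hu; rewrite /load (H1 Hcbt Hu) (edge_flow _ _ _ _ Hrt Hu) setTI.
  congr (EFin (FL _ / _)); apply/setP => v; rewrite !inE.
  exact: (anc_emb Hrt Hcbt).
have Hload0 : forall w x, (forall u, emb u != w) -> load cT w x = 0%E.
  by move=> w x Hw; rewrite /load; case: (H2 Hcbt Hw) => ->.
have Hcong0 : forall pi, (0 <= congestion par g c fI fII pi)%R.
  by move=> pi; exact: bigmax_ge_id.
apply/le_anti/andP; split.
  apply: le_bigmin => [|pi Hpi]; first exact: leey.
  case/andP: Hpi => /injectiveP Hpinj /forallP Hpl.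
  set f := [ffun v => emb (pi v)].
  have Hgd : good parT rT rT setT f.
    apply/goodP; split.
      by move=> v _; rewrite ffunE (anc_r HtT) (leaf_emb Hcbt) Hpl.
    by move=> u v _ _; rewrite !ffunE => /Hinj /Hpinj.
  apply: le_trans (bigmin_le_cond _ _ Hgd) _.
  apply: bigmax_le => [|w /andP[Hw _]]; first by rewrite lee_fin.
  case Hwi: [exists u, emb u == w]; last first.
    by rewrite /Fw Hload0 ?lee_fin //; exact: in_img Hwi.
  case/existsP: Hwi => u /eqP Hwu; rewrite -Hwu in Hw *.
  have Hu : u != g by apply: contraNneq Hw => ->; rewrite Hemb.
  have -> : Fw parT cT FL setT f (emb u) =
            (edge_congestion par g c fI fII pi u)%:E.
    rewrite -(Hload pi u Hu) /Fw; congr (load _ _ (FL _)).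
    by apply/setP => v; rewrite !inE ffunE.
  by rewrite lee_fin; apply: le_bigmax_cond.
apply: le_bigmin => [|f Hf]; first exact: leey.
case/goodP: (Hf) => Hf1 Hf2.
set pi := [ffun v => odflt g [pick u | emb u == f v]].
have Hpi : forall v, emb (pi v) = f v.
  move=> v; case: (Hf1 v (in_setT v)) => _ /(leaf_img Hcbt) [u Hu].
  rewrite /pi ffunE; case: pickP => [u' /eqP //|/(_ u)].
  by rewrite Hu eqxx.
have Hemb_pi : is_embedding par g pi.
  apply/andP; split.
    apply/injectiveP => u v E; apply: Hf2; rewrite ?in_setT //.
    by rewrite -!Hpi E.
  apply/forallP => v; rewrite -(leaf_emb Hcbt) Hpi.
  by case: (Hf1 v (in_setT v)).
apply: le_trans (bigmin_le_cond _ _ Hemb_pi) _.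
rewrite /congestion -EFin_bigmax.
apply: bigmax_le => [|u Hu]; first exact: cost_ge0.
rewrite -(Hload pi u Hu).
have -> : load cT (emb u)
    (FL (setT :&: [set v | anc parT (emb (pi v)) (emb u)])) =
    Fw parT cT FL setT f (emb u).
  by rewrite /Fw; congr (load _ _ (FL _)); apply/setP => v; rewrite !inE Hpi.
apply: le_bigmax_cond; rewrite (anc_r HtT) andbT -Hemb (inj_eq Hinj) //.
Qed.
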